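(* For every ALC game $G$, the algorithm ASF applied to $G$ terminates, and the game it returns is equivalent to $G$.
   Context: Linear clobber: Left owns black stones $\mathtt{x}$, Right owns white stones $\mathtt{o}$, on a path of cells each empty or holding a stone. A move: a player chooses one of their stones adjacent (consecutive on the path) to an opponent stone, removes the opponent stone and moves their own stone into that cell, emptying its original cell. Players alternate; whoever cannot move loses. A part is a maximal block of consecutive non-empty cells, written as a word over $\{\mathtt{o},\mathtt{x}\}$ (concatenation, exponents for repetition); a part and its reversal are identified; a position (game) is the disjoint sum (multiset) of its parts. For a part $p$, $-p$ swaps all colors. A part is trivial if no two adjacent stones differ in color. An ALC game is a finite sum of non-trivial parts each of which appears in some position reachable by legal moves from a single part $(\mathtt{ox})^n$, $n\ge 1$. Games $G,H$ are equivalent if for every game $X$, the sums $G+X$ and $H+X$ have the same outcome class (outcome class: which players have a winning strategy when moving first). Algorithm ASF: given a game (multiset of parts), repeatedly apply the first applicable rule in the preference order $\alpha,-\alpha,\beta,-\beta,\gamma,-\gamma,\delta,-\delta,\varepsilon,-\varepsilon,\zeta,-\zeta,\eta,-\eta$ until no rule applies, and return the result. Each rule replaces one part (matched up to reversal) by the listed parts (''nothing'' means the part is deleted): $\alpha$: each of $\mathtt{o},\mathtt{oo},\mathtt{ooo},\mathtt{ooxx},\mathtt{oxoxox}$ is replaced by nothing. $\beta$: if parts $p$ and $-p$ are both present, delete both. $\gamma$: each of $\mathtt{oxo},\mathtt{ooxox},\mathtt{ooxoxoo},\mathtt{xxoxoxx}$ is replaced by $\mathtt{ox}$. $\delta$: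 $\mathtt{oxoxoxoxo}$ is replaced by $\mathtt{ooxo}$. $\varepsilon$: each of $\mathtt{ooxoxx}$, $\mathtt{oxoxoxoxoxox}$ is replaced by the two parts $\mathtt{oxox}$ and $\mathtt{ox}$. $\zeta$: $\mathtt{ooxoo}$ is replaced by $\mathtt{oox}$. $\eta$: $\mathtt{ooxo}$ is replaced by the two parts $\mathtt{xxo}$ and $\mathtt{ox}$. For a rule $\rho$, the rule $-\rho$ is obtained by replacing every part on both sides of $\rho$ by its negative (e.g. $-\alpha$ deletes each of $\mathtt{x},\mathtt{xx},\mathtt{xxx},\mathtt{xxoo},\mathtt{xoxoxo}$). *)

(* Defs.v *)
From mathcomp Require Import all_boot.
Set Implicit Arguments. Unset Strict Implicit. Unset Printing Implicit Defensive.

(* A stone: true = black x (Left), false = white o (Right). *)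
Definition cX : bool := true.
Definition cO : bool := false.

(* A part is a word over {o,x}; a game (position) is a finite list of parts,
   read as a multiset (all notions below are invariant under reordering). *)
Definition word := seq bool.
Definition game := seq word.

Definition clean (g : game) : game := filter (fun q => q != [::]) g.

(* All results (as lists of parts) of a move by player b (true = Left)
   inside the part p.  At the adjacent cells i, i+1 with different colours,
   the stone of b captures the other one and its original cell becomes empty,
   splitting the part. *)
Definition part_moves (b : bool) (p : word) : seq game :=
  flatten [seq (if nth b p i != nth b p i.+1 then
                  (if nth b p i == b
                   then [:: clean [:: take i p; b :: drop i.+2 p]]
                   else [:: clean [:: rcons (take i p) b; drop i.+2 p]])
                else [::]) | i <- iota 0 (size p).-1].

Definition game_moves (b : bool) (G : game) : seq game :=
  flatten [seq [seq take j G ++ r ++ drop j.+1 G | r <- part_moves b (nth [::] G j)]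
          | j <- iota 0 (size G)].

Definition stones (G : game) : nat := sumn (map size G).

(* win b n G : the player b, moving first in G, has a winning strategy
   (normal play), computed with fuel n; each move removes exactly one stone,
   so fuel (stones G).+1 is exact. *)
Fixpoint win (b : bool) (n : nat) (G : game) : bool :=
  match n with
  | 0 => false
  | n'.+1 => has (fun G' => ~~ win (~~ b) n' G') (game_moves b G)
  end.

Definition first_wins (b : bool) (G : game) : bool := win b (stones G).+1 G.

Definition outcome (G : game) : bool * bool := (first_wins true G, first_wins false G).

Definition game_equiv (G H : game) : Prop :=
  forall X : game, all (fun q => q != [::]) X -> outcome (G ++ X) = outcome (H ++ X).

Inductive reach : game -> game -> Prop :=
| reach_refl G : reach G G
| reach_step G G' G'' :
    G' \in game_moves true G ++ game_moves false G -> reach G' G'' -> reach G G''.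

Definition ox_n (n : nat) : word := flatten (nseq n [:: cO; cX]).

Definition nontrivial (p : word) : bool :=
  has (fun i => nth false p i != nth false p i.+1) (iota 0 (size p).-1).

Definition alc_part (p : word) : Prop :=
  exists n, 0 < n /\ exists P, reach [:: ox_n n] P /\ (p \in P \/ rev p \in P).

Definition alc (G : game) : Prop :=
  all nontrivial G /\ forall p, p \in G -> alc_part p.

Definition negw (p : word) : word := map negb p.

Definition matches (q w : word) : bool := (q == w) || (q == rev w).

Inductive Rule :=
| Simple of seq (word * seq word)   (* replace a part matching lhs by the parts rhs *)
| Beta.                             (* delete a pair p, -p *)

Definition neg_rule (rs : seq (word * seq word)) : seq (word * seq word) :=
  [seq (negw lr.1, map negw lr.2) | lr <- rs].

Definition r_alpha : seq (word * seq word) :=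
  [:: ([:: cO], [::]);
      ([:: cO; cO], [::]);
      ([:: cO; cO; cO], [::]);
      ([:: cO; cO; cX; cX], [::]);
      ([:: cO; cX; cO; cX; cO; cX], [::])].

Definition r_gamma : seq (word * seq word) :=
  [:: ([:: cO; cX; cO], [:: [:: cO; cX]]);
      ([:: cO; cO; cX; cO; cX], [:: [:: cO; cX]]);
      ([:: cO; cO; cX; cO; cX; cO; cO], [:: [:: cO; cX]]);
      ([:: cX; cX; cO; cX; cO; cX; cX], [:: [:: cO; cX]])].

Definition r_delta : seq (word * seq word) :=
  [:: ([:: cO; cX; cO; cX; cO; cX; cO; cX; cO], [:: [:: cO; cO; cX; cO]])].

Definition r_epsilon : seq (word * seq word) :=
  [:: ([:: cO; cO; cX; cO; cX; cX], [:: [:: cO; cX; cO; cX]; [:: cO; cX]]);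
      ([:: cO; cX; cO; cX; cO; cX; cO; cX; cO; cX; cO; cX],
         [:: [:: cO; cX; cO; cX]; [:: cO; cX]])].

Definition r_zeta : seq (word * seq word) :=
  [:: ([:: cO; cO; cX; cO; cO], [:: [:: cO; cO; cX]])].

Definition r_eta : seq (word * seq word) :=
  [:: ([:: cO; cO; cX; cO], [:: [:: cX; cX; cO]; [:: cO; cX]])].

(* preference order alpha,-alpha,beta,-beta,gamma,-gamma,...,eta,-eta
   (-beta coincides with beta) *)
Definition asf_rules : seq Rule :=
  [:: Simple r_alpha; Simple (neg_rule r_alpha); Beta; Beta;
      Simple r_gamma; Simple (neg_rule r_gamma);
      Simple r_delta; Simple (neg_rule r_delta);
      Simple r_epsilon; Simple (neg_rule r_epsilon);
      Simple r_zeta; Simple (neg_rule r_zeta);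
      Simple r_eta; Simple (neg_rule r_eta)].

Definition del2 (i j : nat) (G : game) : game :=
  [seq nth [::] G k | k <- iota 0 (size G) & (k != i) && (k != j)].

Definition rule_results (r : Rule) (G : game) : seq game :=
  match r with
  | Simple rs =>
      flatten [seq [seq take i G ++ lr.2 ++ drop i.+1 G
                   | lr <- rs & matches (nth [::] G i) lr.1]
              | i <- iota 0 (size G)]
  | Beta =>
      flatten [seq [seq del2 i j G
                   | j <- iota 0 (size G)
                   & (i != j) && matches (nth [::] G j) (negw (nth [::] G i))]
              | i <- iota 0 (size G)]
  end.

Definition asf_step (G H : game) : Prop :=
  exists k, k < size asf_rules /\
    H \in rule_results (nth Beta asf_rules k) G /\
    (forall k', k' < k -> rule_results (nth Beta asf_rules k') G = [::]).

Inductive asf_star : game -> game -> Prop :=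
| asf_refl G : asf_star G G
| asf_trans G G' G'' : asf_step G G' -> asf_star G' G'' -> asf_star G G''.

Definition asf_normal (G : game) : bool :=
  all (fun r => rule_results r G == [::]) asf_rules.

(* Main.v *)
Require Import Defs.
From mathcomp Require Import all_boot zify.
Set Implicit Arguments. Unset Strict Implicit. Unset Printing Implicit Defensive.

Lemma take_add (T : Type) (A B : seq T) k : take (size A + k) (A ++ B) = A ++ take k B.
Proof. by elim: A => [|a A /= ->] //; rewrite take0. Qed.
Lemma drop_add (T : Type) (A B : seq T) k : drop (size A + k) (A ++ B) = drop k B.
Proof. by elim: A => [|a A /= ->] //; rewrite take0. Qed.
Lemma nth_add (T : Type) (x : T) (A B : seq T) k : nth x (A ++ B) (size A + k) = nth x B k.
Proof. by elim: A => [|a A /= ->] //; rewrite take0. Qed.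
Lemma drop_cat_le (T : Type) n (A B : seq T) : n <= size A -> drop n (A ++ B) = drop n A ++ B.
Proof. elim: A n => [|a A IH] n H; first by case: n H => [|n]; rewrite ?drop0. case: n H => //= n H; by rewrite IH. Qed.

Lemma split_at (T : Type) (x : T) (G : seq T) i : i < size G -> G = take i G ++ nth x G i :: drop i.+1 G.
Proof. by move=> H; rewrite -drop_nth // cat_take_drop. Qed.

Lemma nth_sz (T : Type) (x : T) (A B : seq T) : nth x (A ++ B) (size A) = nth x B 0.
Proof. by elim: A. Qed.
Lemma nth_sz1 (T : Type) (x : T) (A B : seq T) : nth x (A ++ B) (size A).+1 = nth x B 1.
Proof. by elim: A. Qed.
Lemma take_sz (T : Type) (A B : seq T) : take (size A) (A ++ B) = A.
Proof. by elim: A => [|a A /= ->] //; rewrite take0. Qed.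
Lemma drop_sz1 (T : Type) (A B : seq T) : drop (size A).+1 (A ++ B) = drop 1 B.
Proof. by elim: A. Qed.
Lemma drop_sz2 (T : Type) (A B : seq T) : drop (size A).+2 (A ++ B) = drop 2 B.
Proof. by elim: A. Qed.

Lemma neq_neg (x y : bool) : x != y -> y = ~~ x.
Proof. by case: x; case: y. Qed.

Lemma pmP b p r : r \in part_moves b p <->
  exists u v, (p = u ++ [:: b, ~~ b & v] /\ r = clean [:: u; b :: v]) \/
              (p = u ++ [:: ~~ b, b & v] /\ r = clean [:: rcons u b; v]).
Proof.
split.
- rewrite /part_moves => /flatten_mapP [i]; rewrite mem_iota add0n => /andP [_ Hi].
  have Hi1 : i.+1 < size p by move: Hi; case: (size p).
  have Ep : p = take i p ++ [:: nth b p i, nth b p i.+1 & drop i.+2 p].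
    by rewrite -(drop_nth b Hi1) -(drop_nth b (ltnW Hi1)) cat_take_drop.
  case: ifP => [Hne | _]; last by [].
  have Ey := neq_neg Hne.
  case: ifP => Hb; rewrite inE => /eqP ->; exists (take i p), (drop i.+2 p).
  + left; split => //; rewrite {1}Ep Ey (eqP Hb) //.
  + right; have Hx : nth b p i = ~~ b.
      by move: Hb; move: (nth b p i) => x; clear; case: x; case: b.
    split => //; by rewrite {1}Ep Ey Hx negbK.
- move=> [u [v [[-> ->]|[-> ->]]]]; apply/flatten_mapP; exists (size u);
   rewrite ?mem_iota ?size_cat /=; try lia;
   rewrite nth_sz nth_sz1 take_sz drop_sz2 /=; rewrite drop0; by case: b; rewrite inE eqxx.
Qed.

Lemma gmP b G G' : G' \in game_moves b G <->
  exists A p B r, G = A ++ p :: B /\ r \in part_moves b p /\ G' = A ++ r ++ B.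
Proof.
split.
- rewrite /game_moves => /flatten_mapP [j]; rewrite mem_iota add0n => /andP [_ Hj] /mapP [r Hr ->].
  exists (take j G), (nth [::] G j), (drop j.+1 G), r; split => //.
  exact: split_at.
- move=> [A [p [B [r [-> [Hr ->]]]]]]; apply/flatten_mapP; exists (size A).
  + by rewrite mem_iota size_cat /= add0n; lia.
  + apply/mapP; exists r; rewrite ?nth_sz ?take_sz ?drop_sz1 //=; by rewrite drop0.
Qed.

Lemma stones_cat A B : stones (A ++ B) = stones A + stones B.
Proof. by rewrite /stones map_cat sumn_cat. Qed.
Lemma stones_cons p A : stones (p :: A) = size p + stones A.
Proof. by []. Qed.

Lemma stones_clean l : stones (clean l) = stones l.
Proof. rewrite /stones /clean; elim: l => //= q l IH; case: q => [|a q] /=; by rewrite IH. Qed.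

Lemma stones_pm b p r : r \in part_moves b p -> (stones r).+1 = size p.
Proof.
move/pmP => [u [v [[-> ->]|[-> ->]]]]; rewrite stones_clean /stones /= ?size_cat ?size_rcons /=; lia.
Qed.

Lemma stones_gm b G G' : G' \in game_moves b G -> (stones G').+1 = stones G.
Proof.
move/gmP => [A [p [B [r [-> [Hr ->]]]]]].
rewrite !stones_cat stones_cons -(stones_pm Hr); lia.
Qed.

Notation fw := first_wins.

Lemma win_fuel n m b G : stones G < n -> stones G < m -> win b n G = win b m G.
Proof.
elim: n m b G => // n IH [|m] b G // Hn Hm /=.
apply: eq_in_has => G' HG'; have := stones_gm HG'; move=> E.
by rewrite (IH m) //; lia.
Qed.

Lemma fwE b G : fw b G = has (fun G' => ~~ fw (~~ b) G') (game_moves b G).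
Proof.
rewrite /first_wins /=; apply: eq_in_has => G' HG'; have := stones_gm HG' => E.
by rewrite (@win_fuel (stones G) (stones G').+1) //; lia.
Qed.

Lemma gm_cat b A B : game_moves b (A ++ B) =
  [seq A' ++ B | A' <- game_moves b A] ++ [seq A ++ B' | B' <- game_moves b B].
Proof.
rewrite /game_moves size_cat iotaD map_cat flatten_cat !map_flatten.
congr (_ ++ _).
- rewrite -map_comp; f_equal; apply/eq_in_map => j; rewrite mem_iota add0n => /andP [_ Hj] /=.
  rewrite -map_comp nth_cat Hj takel_cat ?(ltnW Hj) // drop_cat_le //.
  apply: eq_map => r /=; by rewrite !catA.
- rewrite [0 + size A]addnC iotaDl -!map_comp; f_equal; apply/eq_map => k /=.
  rewrite -map_comp nth_add take_add -addnS drop_add.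
  apply: eq_map => r /=; by rewrite !catA.
Qed.

Lemma clean_neg l : clean (map negw l) = map negw (clean l).
Proof.
rewrite /clean; elim: l => //= q l ->; case: q => //=.
Qed.

Lemma pm_neg b p r : r \in part_moves b p -> map negw r \in part_moves (~~ b) (negw p).
Proof.
move/pmP => [u [v [[-> ->]|[-> ->]]]]; apply/pmP; exists (negw u), (negw v).
- left; split; first by rewrite /negw map_cat.
  by rewrite -clean_neg.
- right; split; first by rewrite /negw map_cat.
  by rewrite -clean_neg /= /negw map_rcons.
Qed.

Lemma gm_neg b G G' : G' \in game_moves b G -> map negw G' \in game_moves (~~ b) (map negw G).
Proof.
move/gmP => [A [p [B [r [-> [Hr ->]]]]]]; apply/gmP.
exists (map negw A), (negw p), (map negw B), (map negw r).
by rewrite !map_cat /= (pm_neg Hr).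
Qed.

Lemma rev_nil (s : word) : (rev s != [::]) = (s != [::]).
Proof. by rewrite -!size_eq0 size_rev. Qed.

Lemma rev_clean2 (x y : word) : rev (map rev (clean [:: x; y])) = clean [:: rev y; rev x].
Proof.
rewrite /clean /= !rev_nil; case: (x != [::]); case: (y != [::]) => //.
Qed.

Lemma rev_mid (u v : word) (x y : bool) : rev (u ++ [:: x, y & v]) = rev v ++ [:: y, x & rev u].
Proof. by rewrite rev_cat !rev_cons -!cats1 -!catA. Qed.

Lemma pm_rev b p r : r \in part_moves b p -> rev (map rev r) \in part_moves b (rev p).
Proof.
move/pmP => [u [v [[-> ->]|[-> ->]]]]; apply/pmP; exists (rev v), (rev u); rewrite rev_mid rev_clean2.
- right; split => //. by rewrite rev_cons.
- left; split => //. by rewrite rev_rcons.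
Qed.

Definition eqr (q p : word) := (q == p) || (q == rev p).
Definition rel (G H : game) := forall q, count (eqr q) G = count (eqr q) H.

Lemma eqr_rev q p : eqr q (rev p) = eqr q p.
Proof. by rewrite /eqr revK orbC. Qed.

Lemma eqr_eq p p' q : eqr p p' -> eqr q p = eqr q p'.
Proof. by case/orP => /eqP ->; rewrite ?eqr_rev. Qed.

Lemma count_revmap q r : count (eqr q) (rev (map rev r)) = count (eqr q) r.
Proof. rewrite count_rev count_map; apply: eq_count => x /=; exact: eqr_rev. Qed.

Lemma rel_split G H A p B : rel G H -> G = A ++ p :: B ->
  exists C p' D, H = C ++ p' :: D /\ eqr p p' /\ rel (A ++ B) (C ++ D).
Proof.
move=> HR EG.
have : has (eqr p) H.
  by rewrite has_count -HR EG count_cat /= /eqr eqxx /=; lia.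
case/hasP => p' Hp' Hpp'; move: HR; case/splitPr: Hp' => C D HR.
exists C, p', D; split => //; split => // q.
have := HR q; rewrite EG !count_cat /= (eqr_eq q Hpp'); lia.
Qed.

Lemma fw_rel_aux n b G H : stones G < n -> stones H < n -> rel G H -> fw b G -> fw b H.
Proof.
elim: n b G H => // n IH b G H SG SH HR.
rewrite fwE => /hasP [G' HG' Hn]; rewrite fwE; apply/hasP.
have SG' := stones_gm HG'.
case/gmP: HG' => A [p [B [r [EG [Hr EG']]]]].
case: (rel_split HR EG) => C [p' [D [EH [Hpp' HR2]]]].
have [r' [Hr' Hrr']] : exists r', r' \in part_moves b p' /\ rel r r'.
  case/orP: Hpp' => /eqP Ep.
  - by exists r; subst.
  - exists (rev (map rev r)); split; last by move=> q; rewrite count_revmap.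
    by rewrite -[p']revK -Ep; apply: pm_rev.
have HH' : C ++ r' ++ D \in game_moves b H by apply/gmP; exists C, p', D, r'.
exists (C ++ r' ++ D) => //.
have SH' := stones_gm HH'.
apply/negP => Hf; move/negP: Hn; apply.
apply: (IH _ (C ++ r' ++ D)) => //; try lia.
move=> q; rewrite EG' !count_cat.
have := HR2 q; have := Hrr' q; rewrite !count_cat; lia.
Qed.

Lemma fw_rel b G H : rel G H -> fw b G = fw b H.
Proof.
move=> HR; apply/idP/idP; apply: (@fw_rel_aux (stones G + stones H).+1); try lia.
- done.
- by move=> q; rewrite HR.
Qed.

Lemma negwK p : negw (negw p) = p.
Proof. by rewrite /negw; elim: p => //= x p ->; rewrite negbK. Qed.
Lemma mapnegK W : map negw (map negw W) = W.
Proof. by elim: W => //= p W ->; rewrite negwK. Qed.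
Lemma stones_neg W : stones (map negw W) = stones W.
Proof. by rewrite /stones; elim: W => //= p W ->; rewrite size_map. Qed.

Lemma mirror_aux n W b : stones W < n -> ~~ fw b (W ++ map negw W).
Proof.
elim: n W b => // n IH W b SW.
rewrite fwE; apply/hasPn => G'.
rewrite gm_cat mem_cat => /orP [/mapP [W' HW' ->] | /mapP [N' HN' ->]]; rewrite negbK.
- rewrite fwE; apply/hasP; exists (W' ++ map negw W').
  + by rewrite gm_cat mem_cat; apply/orP; right; apply/map_f/gm_neg.
  + rewrite negbK; apply: IH; have := stones_gm HW'; lia.
- have HW'' := gm_neg HN'; rewrite mapnegK in HW''.
  rewrite fwE; apply/hasP; exists (map negw N' ++ N').
  + by rewrite gm_cat mem_cat; apply/orP; left; apply/map_f.
  + rewrite -{2}(mapnegK N') negbK; apply: IH.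
    have := stones_gm HN'; rewrite !stones_neg; lia.
Qed.

Definition Pb (Z : game) := ~~ fw true Z && ~~ fw false Z.

Lemma mirror W : Pb (W ++ map negw W).
Proof. by rewrite /Pb !(@mirror_aux (stones W).+1). Qed.

Lemma Plem_aux n c Z Y : stones Z + stones Y < n -> ~~ fw (~~ c) Z ->
  (fw c Y -> fw c (Z ++ Y)) /\ (~~ fw (~~ c) Y -> ~~ fw (~~ c) (Z ++ Y)).
Proof.
elim: n Z Y => // n IH Z Y S HZ; split.
- rewrite fwE => /hasP [Y' HY' Hn]; rewrite fwE; apply/hasP; exists (Z ++ Y').
  + by rewrite gm_cat mem_cat; apply/orP; right; apply/map_f.
  + apply: (proj2 (IH Z Y' _ HZ)) => //; have := stones_gm HY'; lia.
- move=> HY; rewrite fwE; apply/hasPn => G'.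
  rewrite gm_cat mem_cat => /orP [/mapP [Z' HZ' ->] | /mapP [Y' HY' ->]]; rewrite !negbK.
  + have : fw c Z'.
      by move: HZ; rewrite fwE => /hasPn /(_ Z' HZ'); rewrite !negbK.
    rewrite fwE => /hasP [Z'' HZ'' Hn]; rewrite fwE; apply/hasP; exists (Z'' ++ Y).
    * by rewrite gm_cat mem_cat; apply/orP; left; apply/map_f.
    * apply: (proj2 (IH Z'' Y _ Hn)) => //.
      have := stones_gm HZ'; have := stones_gm HZ''; lia.
  + have : fw c Y'.
      by move: HY; rewrite fwE => /hasPn /(_ Y' HY'); rewrite !negbK.
    apply: (proj1 (IH Z Y' _ HZ)); have := stones_gm HY'; lia.
Qed.

Lemma Plem c Z Y : Pb Z -> fw c (Z ++ Y) = fw c Y.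
Proof.
move=> /andP [H1 H2]; apply/idP/idP.
- apply: contraLR => HY.
  have HZ : ~~ fw (~~ ~~ c) Z by case: c HY; rewrite ?H1 ?H2.
  have := proj2 (@Plem_aux (stones Z + stones Y).+1 (~~ c) Z Y (ltnSn _) HZ).
  rewrite negbK; exact.
- have HZ : ~~ fw (~~ c) Z by case: c; rewrite ?H1 ?H2.
  exact: (proj1 (@Plem_aux (stones Z + stones Y).+1 c Z Y (ltnSn _) HZ)).
Qed.

Lemma rule_ok p rs c Y : Pb (p :: map negw rs) -> fw c (p :: Y) = fw c (rs ++ Y).
Proof.
move=> HP.
have M := mirror (map negw rs); rewrite mapnegK in M.
rewrite -(@Plem c (map negw rs ++ rs) (p :: Y) M).
rewrite (@fw_rel c _ ((p :: map negw rs) ++ (rs ++ Y))); first by rewrite Plem.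
move=> q; rewrite !count_cat /=; lia.
Qed.

Fixpoint winh (b : bool) (n : nat) (G : game) : bool :=
  match n with
  | 0 => false
  | n'.+1 => (fix h (l : seq game) : bool := match l with [::] => false
       | G' :: l' => if winh (~~ b) n' G' then h l' else true end) (game_moves b G)
  end.

Lemma winhE b n G : winh b n G = win b n G.
Proof.
elim: n b G => // n IH b G /=.
elim: (game_moves b G) => //= G' l ->; rewrite IH; by case: (win _ _ _).
Qed.

Definition Pbh (Z : game) := ~~ winh true (stones Z).+1 Z && ~~ winh false (stones Z).+1 Z.
Lemma PbhE Z : Pbh Z = Pb Z.
Proof. by rewrite /Pbh /Pb !winhE. Qed.

Definition rule_P (r : Rule) := match r with
  | Simple rs => all (fun lr => Pbh (lr.1 :: map negw lr.2)) rs | Beta => true end.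
Lemma rules_P k : rule_P (nth Beta asf_rules k).
Proof. do 14 (case: k => [|k]; first by vm_compute). by case: k. Qed.

Definition f8 (p : word) : nat :=
  if matches p [:: cO; cX] then 1 else if matches p [:: cO; cX; cO; cX] then 2
  else if matches p [:: cO; cO; cX; cO] || matches p [:: cX; cX; cO; cX] then 6
  else (size p).+1.
Lemma f8_pos p : 0 < f8 p.
Proof. by rewrite /f8; repeat case: ifP. Qed.
Definition mu (G : game) := sumn (map f8 G).

Definition rule_dec (r : Rule) := match r with
  | Simple rs => all (fun lr => (sumn (map f8 lr.2) < f8 lr.1) && (sumn (map f8 lr.2) < f8 (rev lr.1))) rs
  | Beta => true end.
Lemma rules_dec k : rule_dec (nth Beta asf_rules k).
Proof. do 14 (case: k => [|k]; first by vm_compute). by case: k. Qed.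

Lemma del2_sum (g : word -> nat) G i j : i < size G -> j < size G -> i != j ->
  \sum_(x <- G) g x = g (nth [::] G i) + g (nth [::] G j) + \sum_(x <- del2 i j G) g x.
Proof.
move=> Hi Hj Hij.
rewrite /del2 big_map big_filter -{1}(mkseq_nth [::] G) /mkseq big_map.
rewrite (bigD1_seq i) ?mem_iota ?iota_uniq //= -big_filter.
rewrite (bigD1_seq j) ?mem_filter ?mem_iota ?filter_uniq ?iota_uniq //=; last by rewrite eq_sym Hij.
rewrite big_filter_cond addnA; done.
Qed.

Lemma count_sum (a : pred word) s : count a s = \sum_(x <- s) (a x : nat).
Proof. elim: s => [|x s IH]; rewrite ?big_nil ?big_cons //= IH //. Qed.
Lemma sumn_sum s : sumn (map f8 s) = \sum_(x <- s) f8 x.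
Proof. elim: s => [|x s IH]; rewrite ?big_nil ?big_cons //= IH //. Qed.

Lemma del2_count (a : pred word) G i j : i < size G -> j < size G -> i != j ->
  count a G = a (nth [::] G i) + a (nth [::] G j) + count a (del2 i j G).
Proof. move=> Hi Hj Hij; by rewrite !count_sum (del2_sum _ Hi Hj Hij). Qed.

Lemma outcome_eq G H : (forall c, fw c G = fw c H) -> outcome G = outcome H.
Proof. by move=> E; rewrite /outcome !E. Qed.

Lemma simple_equiv rs G H : all (fun lr => Pb (lr.1 :: map negw lr.2)) rs ->
  H \in rule_results (Simple rs) G -> game_equiv G H.
Proof.
move=> Hall /flatten_mapP [i]; rewrite mem_iota add0n => /andP [_ Hi] /mapP [[l1 l2]] /=.
rewrite mem_filter => /andP [Hm Hlr] -> X _.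
apply: outcome_eq => c.
have EG := split_at [::] Hi.
set q := nth [::] G i in Hm EG.
set Y := take i G ++ drop i.+1 G ++ X.
rewrite (@fw_rel c _ (q :: Y)); last first.
  by move=> x; rewrite {1}EG /Y !count_cat /= !count_cat; rewrite /word; lia.
rewrite (@fw_rel c _ (l1 :: Y)); last first.
  by move=> x; rewrite /= (@eqr_eq q l1 x Hm).
rewrite (@rule_ok l1 l2); last exact: (allP Hall _ Hlr).
by apply: fw_rel => x; rewrite /Y !count_cat; rewrite ?/word; lia.
Qed.

Lemma beta_equiv G H : H \in rule_results Beta G -> game_equiv G H.
Proof.
move=> /flatten_mapP [i]; rewrite mem_iota add0n => /andP [_ Hi] /mapP [j].
rewrite mem_filter mem_iota add0n => /andP [/andP [Hij Hm] /andP [_ Hj]] -> X _.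
apply: outcome_eq => c.
rewrite (@fw_rel c _ (([:: nth [::] G i] ++ map negw [:: nth [::] G i]) ++ (del2 i j G ++ X))).
  by rewrite (@Plem c _ _ (mirror [:: nth [::] G i])).
move=> x; rewrite !count_cat (del2_count _ Hi Hj Hij) /= (@eqr_eq _ _ x Hm); lia.
Qed.

Lemma mu_dec r G H : rule_dec r -> H \in rule_results r G -> mu H < mu G.
Proof.
case: r => [rs|] /=.
- move=> Hall /flatten_mapP [i]; rewrite mem_iota add0n => /andP [_ Hi] /mapP [[l1 l2]] /=.
  rewrite mem_filter => /andP [Hm Hlr] ->.
  have EG := split_at [::] Hi.
  have -> : mu G = mu (take i G) + f8 (nth [::] G i) + mu (drop i.+1 G).
    by rewrite {1}EG /mu map_cat sumn_cat /= addnA.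
  have /andP [H1 H2] := allP Hall _ Hlr; simpl in H1, H2.
  rewrite /mu !map_cat !sumn_cat.
  simpl in Hm; case/orP: Hm => /eqP ->; by rewrite -addnA ltn_add2l ltn_add2r.
- move=> _ /flatten_mapP [i]; rewrite mem_iota add0n => /andP [_ Hi] /mapP [j].
  rewrite mem_filter mem_iota add0n => /andP [/andP [Hij Hm] /andP [_ Hj]] ->.
  have := del2_sum f8 Hi Hj Hij; rewrite /mu !sumn_sum.
  have := f8_pos (nth [::] G i); have := f8_pos (nth [::] G j); lia.
Qed.

Lemma acc_aux n G : mu G < n -> Acc (fun H' H => asf_step H H') G.
Proof.
elim: n G => [|n IH] G HG; first by [].
constructor => H [k [Hk [HH _]]]; apply: IH.
rewrite ltnS in HG; exact: leq_trans (mu_dec (rules_dec k) HH) HG.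
Qed.

Lemma step_equiv G H : asf_step G H -> game_equiv G H.
Proof.
move=> [k [Hk [HH _]]]; have := rules_P k.
move: HH; case: (nth Beta asf_rules k) => [rs|] HH /= Hall.
- apply: simple_equiv HH; apply/allP => lr Hlr; rewrite -PbhE; exact: (allP Hall _ Hlr).
- exact: beta_equiv HH.
Qed.

Theorem theorem2 (G : game) :
  alc G ->
  Acc (fun H' H => asf_step H H') G /\
  (forall H, asf_star G H -> asf_normal H -> game_equiv G H).
Proof.
move=> _; split; first exact: (@acc_aux (mu G).+1).
move=> H HS _; elim: HS => [G0|G0 G1 G2 S _ IH] X HX => //.
by rewrite (step_equiv S HX) IH.
Qed.
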